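(* Let $\lambda_1,\dots,\lambda_k$ be complex numbers and let $S_1,\dots,S_k$ be invertible elements of $B$. Put $$P:=(a-\lambda_1b)S_1(a-\lambda_2b)S_2\cdots(a-\lambda_kb)S_k\in B[a].$$ Then for every $X\in\tilde{\mathcal{A}}_{conv.}$ there exist a unique $Q\in\tilde{\mathcal{A}}_{conv.}$ and a unique $R\in B[a]$ with $\deg_a(R)\le k-1$ such that $X=QP+R$.
   Context: Let $\mathcal{A}_0$ be the $\mathbb{C}$-algebra of polynomials in two variables $a,b$ subject to the commutation relation $ab-ba=b^2$ (realized e.g. as operators on $\mathbb{C}[s]$, $a$ = multiplication by $s$, $b$ = primitive vanishing at $0$). Let $\widehat{\mathcal{A}}$ be its completion for the $(a,b)$-adic topology: the algebra of formal power series $\sum_{p,q\ge0}\gamma_{p,q}a^pb^q$ (equivalently, uniquely, $\sum\delta_{p,q}b^qa^p$), with product extending that of $\mathcal{A}_0$ continuously. Let $\tilde{\mathcal{A}}_{conv.}\subset\widehat{\mathcal{A}}$ be the subalgebra of series $\sum\gamma_{p,q}a^pb^q$ for which there exist $R>1$ and $C_R>0$ with $|\gamma_{p,q}|\le C_RR^{p+q}q!$ for all $p,q$. Let $B=\mathbb{C}\{\{b\}\}\subset\tilde{\mathcal{A}}_{conv.}$ be the subalgebra of series $\sum_q c_qb^q$ with $|c_q|\le CR^qq!$ for some $C,R$ (the Gevrey series in $b$). $B[a]\subset\tilde{\mathcal{A}}_{conv.}$ denotes the subalgebra of polynomials $\sum_{j=0}^dS_j(b)a^j$, $S_j\in B$,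 in which $aS(b)-S(b)a=b^2S'(b)$; $\deg_a$ is the degree in $a$ of such an expression. *)

(* Defs.v *)
From mathcomp Require Import all_boot all_algebra.
From mathcomp Require Import reals Rstruct complex.
Set Implicit Arguments. Unset Strict Implicit. Unset Printing Implicit Defensive.
Import GRing.Theory Num.Theory.
Local Open Scope ring_scope.

Definition CC : Type := complex Rdefinitions.R.

(* An element of the completion \hat A : the formal series
   sum_{p,q} X p q * a^p b^q  (normal ordering: powers of a on the left). *)
Definition ser := nat -> nat -> CC.

(* Ncoef r q i j = coefficient of a^i b^j in the normal form of b^q a^r,
   computed from  (a^i b^j) a = a^(i+1) b^j - j a^i b^(j+1),
   which follows from the relation ab - ba = b^2. *)
Fixpoint Ncoef (r q i j : nat) : CC :=
  match r with
  | 0 => ((i == 0%N) && (j == q))%:R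
  | r'.+1 =>
      (if i is i'.+1 then Ncoef r' q i' j else 0)
      - (if j is j'.+1 then j'%:R * Ncoef r' q i j' else 0)
  end.

(* the (continuous extension of the) product of A_0:
   coefficient of a^m b^n in X*Y is the (finite) sum over p<=m, s<=n, q,r with
   p+q+r+s = m+n of X p q * Y r s * [a^(m-p) b^(n-s)](b^q a^r). *)
Definition smul (X Y : ser) : ser := fun m n =>
  \sum_(p < m.+1) \sum_(s < n.+1) \sum_(q < (m + n - p - s).+1)
    X p q * Y (m + n - p - s - q)%N s * Ncoef (m + n - p - s - q) q (m - p) (n - s).

Definition sadd (X Y : ser) : ser := fun p q => X p q + Y p q.

Definition sone : ser := fun p q => ((p == 0%N) && (q == 0%N))%:R.

Definition sapow (j : nat) : ser := fun p q => ((p == j) && (q == 0%N))%:R.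

Definition slin (lam : CC) : ser := fun p q =>
  if (p == 1%N) && (q == 0%N) then 1
  else if (p == 0%N) && (q == 1%N) then - lam else 0.

Definition Aconv (X : ser) : Prop :=
  exists (rho c : Rdefinitions.R), 1 < rho /\ 0 < c /\
    forall p q, `|X p q| <= (c * rho ^+ (p + q) * (q`!)%:R)%:C%C.

Definition inB (S : ser) : Prop :=
  (forall p q, (0 < p)%N -> S p q = 0) /\
  exists (c rho : Rdefinitions.R), forall q, `|S 0%N q| <= (c * rho ^+ q * (q`!)%:R)%:C%C.

Definition invB (S : ser) : Prop :=
  inB S /\ exists T, inB T /\ smul S T = sone /\ smul T S = sone.

Definition BaDegLt (k : nat) (R : ser) : Prop :=
  exists Sj : nat -> ser, (forall j, (j < k)%N -> inB (Sj j)) /\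
    R = (fun p q => \sum_(j < k) smul (Sj j) (sapow j) p q).

Fixpoint Pprod (lam : nat -> CC) (S : nat -> ser) (k : nat) : ser :=
  match k with
  | 0 => sone
  | k'.+1 => smul (Pprod lam S k') (smul (slin (lam k')) (S k'))
  end.

(* Main.v *)
Require Import Defs.
From mathcomp Require Import all_boot all_algebra.
From mathcomp Require Import reals Rstruct complex.
Import GRing.Theory Num.Theory.
Local Open Scope ring_scope.
From mathcomp Require Import all_order.
From Stdlib Require Import FunctionalExtensionality.
From mathcomp Require Import zify ring lra.
Import Order.TTheory GRing.Theory Num.Theory.
Local Open Scope ring_scope.

Local Notation RR := Rdefinitions.R.
Tactic Notation "fext" ident(m) ident(n) := apply: functional_extensionality => m; apply: functional_extensionality => n.

Definition Ra (X : ser) : ser := fun m n =>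
  (if m is m'.+1 then X m' n else 0) - (if n is n'.+1 then n'%:R * X m n' else 0).
Definition Rb (X : ser) : ser := fun m n => if n is n'.+1 then X m n' else 0.
Definition T (r s : nat) (X : ser) : ser := iter s Rb (iter r Ra X).
Arguments T : simpl never.

Lemma NcoefS r q i j : Ncoef r.+1 q i j = Ra (Ncoef r q) i j.
Proof. by []. Qed.

Lemma Ncoef_hom r q i j : (i + j != r + q)%N -> Ncoef r q i j = 0.
Proof.
elim: r i j => [|r IH] i j /=.
  move=> H; case: i H => [|i] H //=; case: eqP H => // ->; rewrite add0n eqxx.
move=> H; case: i H => [|i] H; case: j H => [|j] H; rewrite ?IH ?mulr0 ?subr0 //; lia.
Qed.

Lemma Ncoef_lowb r q i j : (j < q)%N -> Ncoef r q i j = 0.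
Proof.
elim: r i j => [|r IH] i j /=.
  by move=> H; case: i => //=; case: (eqVneq j q) => //= E; lia.
move=> H; case: i => [|i]; case: j H => [|j] H; rewrite ?IH ?mulr0 ?subr0 //; lia.
Qed.

Lemma Ncoef_upa r q i j : (r < i)%N -> Ncoef r q i j = 0.
Proof.
elim: r i j => [|r IH] i j /=.
  by case: i.
move=> H; case: i H => [|i] H //; case: j => [|j]; rewrite ?IH ?mulr0 ?subr0 //; lia.
Qed.

Lemma iterRaE r (X : ser) m n :
  iter r Ra X m n = \sum_(p < m.+1) \sum_(q < n.+1) X p q * Ncoef r q (m - p) n.
Proof.
elim: r m n => [|r IH] m n.
  rewrite /= (bigD1 ord_max) //= [X in _ + X]big1 ?addr0; last first.
    move=> p /eqP Hp; apply: big1 => q _.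
    have : (m - p != 0)%N.
      by move: (ltn_ord p) Hp => Hp Hne; rewrite subn_eq0 -ltnNge ltn_neqAle; apply/andP; split;
        [apply/eqP => E; apply: Hne; apply: val_inj => /=; lia | lia].
    by case: (m - p)%N => //= _; rewrite mulr0.
  rewrite subnn (bigD1 ord_max) //= [X in _ + X]big1 ?addr0; first by rewrite !eqxx mulr1.
  move=> q /eqP Hq; rewrite eq_sym; case: eqP; rewrite ?mulr0 //= => E.
  by exfalso; apply: Hq; apply: val_inj => /=; rewrite E.
rewrite iterS /Ra -/Ra.
have -> : \sum_(p < m.+1) \sum_(q < n.+1) X p q * Ncoef r.+1 q (m - p) n =
  \sum_(p < m.+1) \sum_(q < n.+1) X p q * (if (m - p)%N is i'.+1 then Ncoef r q i' n else 0)
  - \sum_(p < m.+1) \sum_(q < n.+1) X p q * (if n is n'.+1 then n'%:R * Ncoef r q (m - p) n' else 0).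
  rewrite -sumrB; apply: eq_bigr => p _; rewrite -sumrB; apply: eq_bigr => q _.
  by rewrite NcoefS /Ra mulrBr.
congr (_ - _).
  case: m => [|m].
    by rewrite big1 // => p _; rewrite big1 // => q _; rewrite sub0n mulr0.
  rewrite big_ord_recr /= subnn.
  rewrite [X in _ + X]big1 ?addr0; last by move=> q _; rewrite mulr0.
  rewrite IH; apply: eq_bigr => p _; apply: eq_bigr => q _.
  by rewrite subSn //= -ltnS; exact: ltn_ord.
case: n => [|n].
  by rewrite big1 // => p _; rewrite big1 // => q _; rewrite mulr0.
rewrite IH mulr_sumr; apply: eq_bigr => p _.
rewrite [in RHS]big_ord_recr /= (@Ncoef_lowb r n.+1 _ n) // mulr0 mulr0 addr0 mulr_sumr.
by apply: eq_bigr => q _; rewrite mulrCA.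
Qed.

Lemma iterRbE s (Z : ser) m n :
  iter s Rb Z m n = if (s <= n)%N then Z m (n - s)%N else 0.
Proof.
elim: s n => [|s IH] n; first by rewrite /= subn0.
by rewrite iterS /Rb -/Rb; case: n => [|n] //; rewrite IH.
Qed.

Lemma TE r s X m n : T r s X m n =
  if (s <= n)%N then \sum_(p < m.+1) \sum_(q < (n - s).+1) X p q * Ncoef r q (m - p) (n - s)
  else 0.
Proof. by rewrite /T iterRbE iterRaE. Qed.

Lemma T_van r s X m n : (m + n < r + s)%N -> T r s X m n = 0.
Proof.
move=> H; rewrite TE; case: ifP => // Hs.
apply: big1 => p _; apply: big1 => q _; rewrite Ncoef_hom ?mulr0 //.
apply/eqP => E; move: (ltn_ord p) => Hp; lia.
Qed.

Lemma smulE X Y m n K : (m + n < K)%N ->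
  smul X Y m n = \sum_(r < K) \sum_(s < K) Y r s * T r s X m n.
Proof.
move=> HK.
pose C := \sum_(p < m.+1) \sum_(s < K) \sum_(q < K) \sum_(r < K)
   (if (s <= n)%N then X p q * Y r s * Ncoef r q (m - p) (n - s) else 0).
transitivity C.
  rewrite /smul /C; apply: eq_bigr => p _.
  have Hp := ltn_ord p.
  rewrite (big_ord_widen K (fun s : nat => \sum_(q < (m + n - p - s).+1)
      X p q * Y (m + n - p - s - q)%N s * Ncoef (m + n - p - s - q) q (m - p) (n - s))); last lia.
  rewrite big_mkcond; apply: eq_bigr => s _ /=.
  case: ifP => Hs; last first.
    by rewrite big1 // => q _; rewrite big1 // => r _; rewrite ifF //; apply/negbTE; rewrite -ltnNge; lia.
  rewrite (big_ord_widen K (fun q : nat =>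
      X p q * Y (m + n - p - s - q)%N s * Ncoef (m + n - p - s - q) q (m - p) (n - s))); last lia.
  rewrite big_mkcond; apply: eq_bigr => q _ /=.
  case: ifP => Hq.
    have Hr : (m + n - p - s - q < K)%N by lia.
    rewrite (bigD1 (Ordinal Hr)) //= [X in _ + X]big1 ?addr0.
      by rewrite ifT //; lia.
    move=> r /eqP Hne; rewrite ifT; last lia.
    rewrite Ncoef_hom ?mulr0 //; apply/eqP => E; apply: Hne; apply: val_inj => /=; lia.
  apply/esym; apply: big1 => r _; rewrite ifT; last lia.
  rewrite Ncoef_hom ?mulr0 //; apply/eqP => E; lia.
have -> : \sum_(r < K) \sum_(s < K) Y r s * T r s X m n =
   \sum_(r < K) \sum_(s < K) \sum_(p < m.+1) \sum_(q < K)
     (if (s <= n)%N then X p q * Y r s * Ncoef r q (m - p) (n - s) else 0).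
  apply: eq_bigr => r _; apply: eq_bigr => s _; rewrite TE.
  case: ifP => Hs; last first.
    by rewrite mulr0 big1 // => p _; rewrite big1.
  rewrite mulr_sumr; apply: eq_bigr => p _; rewrite mulr_sumr.
  rewrite (big_ord_widen K (fun q : nat => Y r s * (X p q * Ncoef r q (m - p) (n - s)))); last lia.
  rewrite big_mkcond; apply: eq_bigr => q _ /=.
  case: ifP => Hq; first by rewrite mulrCA mulrA.
  by rewrite Ncoef_lowb ?mulr0 //; lia.
apply/esym; rewrite [LHS]exchange_big /C [RHS]exchange_big /=; apply: eq_bigr => s _.
rewrite [LHS]exchange_big /=; apply: eq_bigr => p _.
by rewrite [LHS]exchange_big.
Qed.

Lemma Ra_iterRb s Z m n : Ra (iter s Rb Z) m n =
  iter s Rb (Ra Z) m n - s%:R * iter s.+1 Rb Z m n.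
Proof.
rewrite /Ra.
case: m => [|m]; case: n => [|n]; rewrite !iterRbE /=.
- by case: s => [|s]; rewrite /= ?mulr0 ?subr0.
- have [Hs|Hs] := leqP s n.
    have h1 : (s <= n.+1)%N by lia. have h2 : (s < n.+1)%N by lia. rewrite ?Hs ?h1 ?h2 /=.
    have -> : (n.+1 - s)%N = (n - s).+1 by lia.
    have -> : (n.+1 - s.+1)%N = (n - s)%N by lia.
    have -> : (n%:R : CC) = (n - s)%:R + s%:R by rewrite -natrD; congr (_%:R); lia.
    by rewrite mulrDl !sub0r opprD.
  have h1 : (s <= n)%N = false by lia. have h2 : (s < n.+1)%N = false by lia. rewrite ?h1 ?h2 /=.
  case: ifP => H2; last by rewrite !mulr0 subr0.
  have -> : (n.+1 - s)%N = 0%N by lia.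
  by rewrite !mulr0 !subr0.
- by case: s => [|s]; rewrite /= ?mulr0 ?subr0.
- have [Hs|Hs] := leqP s n.
    have h1 : (s <= n.+1)%N by lia. have h2 : (s < n.+1)%N by lia. rewrite ?Hs ?h1 ?h2 /=.
    have -> : (n.+1 - s)%N = (n - s).+1 by lia.
    have -> : (n.+1 - s.+1)%N = (n - s)%N by lia.
    have -> : (n%:R : CC) = (n - s)%:R + s%:R by rewrite -natrD; congr (_%:R); lia.
    by rewrite mulrDl opprD addrA.
  have h1 : (s <= n)%N = false by lia. have h2 : (s < n.+1)%N = false by lia. rewrite ?h1 ?h2 /=.
  case: ifP => H2; last by rewrite !mulr0 subr0.
  have -> : (n.+1 - s)%N = 0%N by lia.
  by rewrite !mulr0 !subr0.
Qed.

Lemma RaT r s X : Ra (T r s X) = fun m n => T r.+1 s X m n - s%:R * T r s.+1 X m n.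
Proof. by apply: functional_extensionality => m; apply: functional_extensionality => n; rewrite Ra_iterRb. Qed.

Lemma Ra_smul X Y : Ra (smul X Y) = smul X (Ra Y).
Proof.
apply: functional_extensionality => m; apply: functional_extensionality => n.
have E : forall K, (m + n < K)%N ->
    Ra (smul X Y) m n = \sum_(r < K) \sum_(s < K) Y r s * Ra (T r s X) m n.
  move=> K' HK; rewrite /Ra; case: m HK => [|m] HK; case: n HK => [|n] HK.
  - by rewrite sub0r oppr0; apply/esym; apply: big1 => r _; apply: big1 => s _; rewrite ?subrr mulr0.
  - rewrite (@smulE X Y 0 n K') ?sub0r; last lia.
    rewrite mulr_sumr -sumrN; apply: eq_bigr => r _; rewrite mulr_sumr -sumrN; apply: eq_bigr => s _.
    by rewrite sub0r mulrN mulrCA.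
  - rewrite (@smulE X Y m 0 K') ?subr0; last lia.
    by apply: eq_bigr => r _; apply: eq_bigr => s _; rewrite subr0.
  - rewrite (@smulE X Y m n.+1 K'); last lia.
    rewrite (@smulE X Y m.+1 n K'); last lia.
    rewrite mulr_sumr -sumrB; apply: eq_bigr => r _; rewrite mulr_sumr -sumrB; apply: eq_bigr => s _.
    by rewrite mulrBr mulrCA.
set K := (m + n).+2.
rewrite (E K); last by rewrite /K; lia.
rewrite (@smulE X (Ra Y) m n K); last by rewrite /K; lia.
have -> : \sum_(r < K) \sum_(s < K) Y r s * Ra (T r s X) m n =
  \sum_(r < K) \sum_(s < K) Y r s * T r.+1 s X m n -
  \sum_(r < K) \sum_(s < K) s%:R * Y r s * T r s.+1 X m n.
  rewrite -sumrB; apply: eq_bigr => r _; rewrite -sumrB; apply: eq_bigr => s _.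
  by rewrite RaT mulrBr mulrCA mulrA.
have -> : \sum_(r < K) \sum_(s < K) Ra Y r s * T r s X m n =
  \sum_(r < K) \sum_(s < K) (if nat_of_ord r is r'.+1 then Y r' s else 0) * T r s X m n -
  \sum_(r < K) \sum_(s < K) (if nat_of_ord s is s'.+1 then s'%:R * Y r s' else 0) * T r s X m n.
  rewrite -sumrB; apply: eq_bigr => r _; rewrite -sumrB; apply: eq_bigr => s _.
  by rewrite /Ra mulrBl.
congr (_ - _).
  rewrite /K [LHS]big_ord_recr /= [X in _ + X]big1 ?addr0; last first.
    by move=> s _; rewrite T_van ?mulr0 //; lia.
  rewrite [RHS]big_ord_recl /= [X in X + _]big1 ?add0r //.
  by move=> s _; rewrite mul0r.
apply: eq_bigr => r _.
rewrite /K [LHS]big_ord_recr /= (@T_van r (m + n).+2 X m n) ?mulr0 ?addr0; last lia.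
rewrite [RHS]big_ord_recl /= mul0r add0r.
by apply: eq_bigr => s _.
Qed.

Lemma Rb_smul X Y : Rb (smul X Y) = smul X (Rb Y).
Proof.
apply: functional_extensionality => m; apply: functional_extensionality => n.
case: n => [|n].
  rewrite (@smulE X (Rb Y) m 0 (m.+1)); last lia.
  apply/esym; apply: big1 => r _; apply: big1 => s _.
  by rewrite /Rb; case: (nat_of_ord s) => [|s'] /=; rewrite ?mul0r // /T iterRbE /= mulr0.
rewrite (@smulE X (Rb Y) m n.+1 (m + n).+2); last lia.
rewrite /Rb (@smulE X Y m n (m + n).+2); last lia.
apply: eq_bigr => r _.
rewrite [RHS]big_ord_recl /= mul0r add0r.
rewrite [LHS]big_ord_recr /= (@T_van r (m + n).+1 X m n) ?mulr0 ?addr0; last lia.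
apply: eq_bigr => s _. by [].
Qed.

Lemma iterRa_smul t X Y : iter t Ra (smul X Y) = smul X (iter t Ra Y).
Proof. by elim: t => [|t IH] //=; rewrite IH Ra_smul. Qed.

Lemma iterRb_smul u X Y : iter u Rb (smul X Y) = smul X (iter u Rb Y).
Proof. by elim: u => [|u IH] //=; rewrite IH Rb_smul. Qed.

Lemma T_smul t u X Y : T t u (smul X Y) = smul X (T t u Y).
Proof. by rewrite /T iterRa_smul iterRb_smul. Qed.

Lemma smulA X Y Z : smul (smul X Y) Z = smul X (smul Y Z).
Proof.
apply: functional_extensionality => m; apply: functional_extensionality => n.
set K := (m + n).+1.
rewrite (@smulE (smul X Y) Z m n K) ?(@smulE X (smul Y Z) m n K) /K //.
have -> : \sum_(r < (m + n).+1) \sum_(s < (m + n).+1) smul Y Z r s * T r s X m n =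
  \sum_(r < (m + n).+1) \sum_(s < (m + n).+1) \sum_(t < (m + n).+1) \sum_(u < (m + n).+1)
     Z t u * T t u Y r s * T r s X m n.
  apply: eq_bigr => r _; apply: eq_bigr => s _.
  have [Hrs|Hrs] := leqP (r + s) (m + n).
    rewrite (@smulE Y Z r s (m + n).+1) // mulr_suml; apply: eq_bigr => t _.
    by rewrite mulr_suml.
  rewrite T_van // mulr0; apply/esym; apply: big1 => t _; apply: big1 => u _.
  by rewrite mulr0.
have -> : \sum_(t < (m + n).+1) \sum_(u < (m + n).+1) Z t u * T t u (smul X Y) m n =
  \sum_(t < (m + n).+1) \sum_(u < (m + n).+1) \sum_(r < (m + n).+1) \sum_(s < (m + n).+1)
     Z t u * T t u Y r s * T r s X m n.
  apply: eq_bigr => t _; apply: eq_bigr => u _.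
  rewrite T_smul (@smulE X (T t u Y) m n (m + n).+1) // mulr_sumr; apply: eq_bigr => r _.
  by rewrite mulr_sumr; apply: eq_bigr => s _; rewrite mulrA.
under eq_bigr => t _ do rewrite exchange_big.
under eq_bigr => t _ do under eq_bigr => r _ do rewrite exchange_big.
rewrite exchange_big /=.
by under eq_bigr => r _ do rewrite exchange_big.
Qed.

Lemma smul1 X : smul X sone = X.
Proof.
apply: functional_extensionality => m; apply: functional_extensionality => n.
rewrite (@smulE X sone m n (m + n).+1) // big_ord_recl [X in _ + X]big1 ?addr0; last first.
  by move=> r _; apply: big1 => s _; rewrite /sone /= mul0r.
rewrite big_ord_recl [X in _ + X]big1 ?addr0; last first.
  by move=> s _; rewrite /sone /= ?andbF mul0r.
by rewrite /sone /= mul1r.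
Qed.

Lemma smulDl X1 X2 Y : smul (sadd X1 X2) Y = sadd (smul X1 Y) (smul X2 Y).
Proof.
apply: functional_extensionality => m; apply: functional_extensionality => n.
rewrite /smul /sadd -big_split; apply: eq_bigr => p _.
rewrite -big_split; apply: eq_bigr => s _.
rewrite -big_split; apply: eq_bigr => q _.
by rewrite !mulrDl.
Qed.

Lemma smulDr X Y1 Y2 : smul X (sadd Y1 Y2) = sadd (smul X Y1) (smul X Y2).
Proof.
apply: functional_extensionality => m; apply: functional_extensionality => n.
rewrite /smul /sadd -big_split; apply: eq_bigr => p _.
rewrite -big_split; apply: eq_bigr => s _.
rewrite -big_split; apply: eq_bigr => q _.
by rewrite mulrDr !mulrDl.
Qed.

Definition sscale (c : CC) (X : ser) : ser := fun m n => c * X m n.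
Definition szero : ser := fun _ _ => 0.

Lemma smulZl c X Y : smul (sscale c X) Y = sscale c (smul X Y).
Proof.
apply: functional_extensionality => m; apply: functional_extensionality => n.
rewrite /smul /sscale mulr_sumr; apply: eq_bigr => p _.
rewrite mulr_sumr; apply: eq_bigr => s _.
rewrite mulr_sumr; apply: eq_bigr => q _.
by rewrite !mulrA.
Qed.

Lemma smulZr c X Y : smul X (sscale c Y) = sscale c (smul X Y).
Proof.
apply: functional_extensionality => m; apply: functional_extensionality => n.
rewrite /smul /sscale mulr_sumr; apply: eq_bigr => p _.
rewrite mulr_sumr; apply: eq_bigr => s _.
rewrite mulr_sumr; apply: eq_bigr => q _.
by rewrite mulrCA !mulrA.
Qed.

Lemma smul0l Y : smul szero Y = szero.
Proof.
apply: functional_extensionality => m; apply: functional_extensionality => n.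
by rewrite /smul; apply: big1 => p _; apply: big1 => s _; apply: big1 => q _; rewrite /szero !mul0r.
Qed.

Lemma smul_sum_l k (F : nat -> ser) Y :
  smul (fun m n => \sum_(j < k) F j m n) Y = fun m n => \sum_(j < k) smul (F j) Y m n.
Proof.
elim: k => [|k IH].
  have -> : (fun m n => \sum_(j < 0) F j m n) = szero.
    by apply: functional_extensionality => m; apply: functional_extensionality => n; rewrite big_ord0.
  rewrite smul0l.
  by apply: functional_extensionality => m; apply: functional_extensionality => n; rewrite big_ord0.
have -> : (fun m n => \sum_(j < k.+1) F j m n) = sadd (fun m n => \sum_(j < k) F j m n) (F k).
  apply: functional_extensionality => m; apply: functional_extensionality => n.
  by rewrite big_ord_recr.
rewrite smulDl IH.
apply: functional_extensionality => m; apply: functional_extensionality => n.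
by rewrite /sadd big_ord_recr.
Qed.

Lemma sum_first2 (f : nat -> CC) k : (forall i, (2 <= i)%N -> f i = 0) ->
  \sum_(i < k.+2) f i = f 0%N + f 1%N.
Proof.
move=> H; rewrite big_ord_recl big_ord_recl big1 ?addr0 ?addrA //.
by move=> i _; apply: H.
Qed.

Lemma smul_slin X lam : smul X (slin lam) = fun m n => Ra X m n - lam * Rb X m n.
Proof.
apply: functional_extensionality => m; apply: functional_extensionality => n.
rewrite (@smulE X (slin lam) m n (m + n).+2) //.
have H0 : forall r : nat, \sum_(s < (m+n).+2) slin lam r s * T r s X m n =
   slin lam r 0 * T r 0 X m n + slin lam r 1 * T r 1 X m n.
  move=> r; rewrite (sum_first2 (fun s => slin lam r s * T r s X m n)) //.
  move=> i Hi; rewrite /slin.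
  have -> : (i == 0%N) = false by apply/negbTE; rewrite -lt0n; lia.
  have -> : (i == 1%N) = false by apply/negbTE; apply/eqP; lia.
  by rewrite !andbF mul0r.
rewrite (sum_first2 (fun r => \sum_(s < (m+n).+2) slin lam r s * T r s X m n)).
  by rewrite !H0 /slin /= !mul0r add0r addr0 mul1r mulNr addrC.
move=> i Hi; rewrite H0 /slin.
case: i Hi => [|[|i]] //= _.
by rewrite !mul0r addr0.
Qed.

Lemma smul_B X V : (forall p q, (0 < p)%N -> V p q = 0) ->
  smul X V = fun m n => \sum_(s < n.+1) V 0%N s * X m (n - s)%N.
Proof.
move=> HV; apply: functional_extensionality => m; apply: functional_extensionality => n.
rewrite (@smulE X V m n (m + n).+1) // big_ord_recl [X in _ + X]big1 ?addr0; last first.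
  by move=> r _; apply: big1 => s _; rewrite HV ?mul0r.
rewrite (big_ord_widen (m + n).+1 (fun s : nat => V 0%N s * X m (n - s)%N)); last lia.
rewrite [RHS]big_mkcond; apply: eq_bigr => s _ /=.
by rewrite /T /= iterRbE ltnS; case: ifP; rewrite ?mulr0.
Qed.

Definition Dl (lam : CC) (V : ser) : ser := fun m n =>
  if m is 0%N then (if n is n'.+1 then (n'%:R - lam) * V 0%N n' else 0) else 0.

Lemma smul_slinB lam V : (forall p q, (0 < p)%N -> V p q = 0) ->
  smul (slin lam) V = sadd (Ra V) (Dl lam V).
Proof.
move=> HV; rewrite smul_B //.
apply: functional_extensionality => m; apply: functional_extensionality => n.
rewrite /sadd /Ra /Dl.
case: m => [|[|m]].
- case: n => [|n].
    by rewrite big_ord1 /slin /=; ring.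
  rewrite big_ord_recr /= subnn /slin /= mulr0 addr0.
  case: n => [|n].
    by rewrite big_ord1 /=; ring.
  rewrite big_ord_recr /= [X in X + _]big1.
    by rewrite subSnn /=; ring.
  move=> s _; have -> : (n.+2 - s = (n.+1 - s).+1)%N by move: (ltn_ord s) => /= Hs; lia.
  have -> : ((n.+1 - s).+1 == 1%N) = false by move: (ltn_ord s) => /= Hs; apply/negbTE; lia.
  by rewrite /= mulr0.
- rewrite big_ord_recr /= subnn /slin /= [X in X + _]big1.
    by case: n => [|n]; rewrite ?(HV 1%N) //; ring.
  move=> s _; have -> : ((n - s)%N == 0%N) = false by move: (ltn_ord s) => /= Hs; apply/negbTE; lia.
  by rewrite /= mulr0.
- rewrite big1; last by move=> s _; rewrite /slin /= mulr0.
  by rewrite (HV m.+1) //; case: n => [|n]; rewrite ?(HV m.+2) //; ring.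
Qed.


Definition nc (z : CC) : RR := ComplexField.Normc.normc z.
Arguments nc : simpl never.

Lemma normE (z : CC) : `|z| = (nc z)%:C%C.
Proof. by case: z. Qed.

Lemma bndE (z : CC) (x : RR) : (`|z| <= x%:C%C) = (nc z <= x).
Proof. by rewrite normE lecR. Qed.

Lemma nc_ge0 z : 0 <= nc z.
Proof. by rewrite -ler0c -normE normr_ge0. Qed.

Lemma ncD x y : nc (x + y) <= nc x + nc y.
Proof. by rewrite -lecR rmorphD -!normE ler_normD. Qed.

Lemma ncM x y : nc (x * y) = nc x * nc y.
Proof. by apply: complexI; rewrite rmorphM -!normE normrM. Qed.

Lemma ncN x : nc (- x) = nc x.
Proof. by apply: complexI; rewrite -!normE normrN. Qed.

Lemma nc_nat n : nc n%:R = n%:R.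
Proof. by apply: complexI; rewrite -normE rmorph_nat normr_nat. Qed.

Lemma nc0 : nc 0 = 0.
Proof. by have := nc_nat 0; rewrite !mulr0n. Qed.

Lemma nc_sum k (F : 'I_k -> CC) : nc (\sum_(i < k) F i) <= \sum_(i < k) nc (F i).
Proof.
rewrite -lecR rmorph_sum -normE; apply: le_trans (ler_norm_sum _ _ _) _.
by apply: ler_sum => i _; rewrite normE.
Qed.

Lemma two_pow n : (n.+1%:R : RR) <= 2%:R ^+ n.
Proof. by rewrite -natrX ler_nat; apply: ltn_expl. Qed.

Lemma fact_split s n : (s <= n)%N -> ((s`!)%:R * ((n - s)`!)%:R : RR) <= (n`!)%:R.
Proof.
move=> Hs; rewrite -natrM ler_nat -(bin_fact Hs).
by apply: leq_pmull; rewrite bin_gt0.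
Qed.

Lemma fact_ge0 n : (0 : RR) <= (n`!)%:R.
Proof. by rewrite ler0n. Qed.

Definition Gev (S : ser) (c rho : RR) := forall q, nc (S 0%N q) <= c * rho ^+ q * (q`!)%:R.

Lemma inB_norm S : inB S ->
  (forall p q, (0 < p)%N -> S p q = 0) /\ exists c rho, 0 <= c /\ 1 <= rho /\ Gev S c rho.
Proof.
move=> [Hs [c [rho H]]]; split => //.
exists `|c|, (`|rho| + 1); split; first exact: normr_ge0.
split; first by rewrite lerDr normr_ge0.
move=> q; move: (H q); rewrite bndE => Hq; apply: le_trans Hq _.
apply: le_trans (ler_norm _) _.
rewrite !normrM normrX normr_nat ler_wpM2r ?fact_ge0 // ler_wpM2l ?normr_ge0 //.
by rewrite lerXn2r ?nnegrE ?normr_ge0 ?addr_ge0 // lerDl.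
Qed.

Lemma inB_of S c rho : (forall p q, (0 < p)%N -> S p q = 0) -> Gev S c rho -> inB S.
Proof. by move=> Hs H; split => //; exists c, rho => q; rewrite bndE. Qed.

Lemma Gev_mono S c rho c' rho' : Gev S c rho -> 0 <= c -> 0 <= rho -> c <= c' -> rho <= rho' ->
  Gev S c' rho'.
Proof.
move=> H hc hr hc' hr' q; apply: le_trans (H q) _.
rewrite ler_wpM2r ?fact_ge0 // ler_pM ?exprn_ge0 //.
by rewrite lerXn2r ?nnegrE // (le_trans hr).
Qed.

Lemma inB_add S1 S2 : inB S1 -> inB S2 -> inB (sadd S1 S2).
Proof.
move=> /inB_norm [H1 [c1 [r1 [hc1 [hr1 G1]]]]] /inB_norm [H2 [c2 [r2 [hc2 [hr2 G2]]]]].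
apply: (@inB_of _ (c1 + c2) (r1 + r2)).
  by move=> p q Hp; rewrite /sadd H1 ?H2 ?addr0.
have hr1' : 0 <= r1 by apply: le_trans hr1.
have hr2' : 0 <= r2 by apply: le_trans hr2.
move=> q; apply: le_trans (ncD _ _) _.
rewrite !mulrDl; apply: lerD.
  by apply: (@Gev_mono S1 c1 r1 c1 (r1 + r2)) => //; rewrite lerDl.
by apply: (@Gev_mono S2 c2 r2 c2 (r1 + r2)) => //; rewrite lerDr.
Qed.

Lemma term_bound (c1 c2 r : RR) s n : (s <= n)%N -> 0 <= c1 -> 0 <= c2 -> 0 <= r ->
  (c2 * r ^+ s * (s`!)%:R) * (c1 * r ^+ (n - s) * ((n - s)`!)%:R) <= c1 * c2 * r ^+ n * (n`!)%:R.
Proof.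
move=> Hs h1 h2 hr.
have -> : (c2 * r ^+ s * (s`!)%:R) * (c1 * r ^+ (n - s) * ((n - s)`!)%:R) =
   c1 * c2 * r ^+ n * ((s`!)%:R * ((n - s)`!)%:R).
  by rewrite -{3}(subnKC Hs) exprD; ring.
apply: ler_pM. all: try by rewrite ?mulr_ge0 ?exprn_ge0.
exact: fact_split.
Qed.

Lemma sum_const_bound n (f : nat -> RR) (x : RR) : (forall s, (s <= n)%N -> f s <= x) -> 0 <= x ->
  \sum_(s < n.+1) f s <= x * 2%:R ^+ n.
Proof.
move=> H hx; apply: le_trans (_ : \sum_(s < n.+1) x <= _).
  by apply: ler_sum => s _; apply: H; rewrite -ltnS.
rewrite sumr_const card_ord -[x *+ _]mulr_natr; apply: ler_pM => //; exact: two_pow.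
Qed.

Lemma inB_mul U V : inB U -> inB V -> inB (smul U V).
Proof.
move=> /inB_norm [H1 [c1 [r1 [hc1 [hr1 G1]]]]] /inB_norm [H2 [c2 [r2 [hc2 [hr2 G2]]]]].
rewrite smul_B //.
have hr1' : 0 <= r1 by apply: le_trans hr1.
have hr2' : 0 <= r2 by apply: le_trans hr2.
apply: (@inB_of _ (c1 * c2) (2%:R * (r1 + r2))).
  by move=> p q Hp; apply: big1 => s _; rewrite H1 ?mulr0.
move=> n; apply: le_trans (nc_sum _ _) _.
apply: le_trans (@sum_const_bound n (fun s => nc (V 0%N s * U 0%N (n - s)%N)) (c1 * c2 * (r1 + r2) ^+ n * (n`!)%:R) _ _) _.
- move=> s Hs; rewrite ncM; apply: le_trans _ (@term_bound c1 c2 (r1 + r2) s n Hs hc1 hc2 (addr_ge0 hr1' hr2')).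
  apply: ler_pM; rewrite ?nc_ge0 //.
    by apply: (@Gev_mono V c2 r2 c2 (r1 + r2)) => //; rewrite lerDr.
  by apply: (@Gev_mono U c1 r1 c1 (r1 + r2)) => //; rewrite lerDl.
- by rewrite !mulr_ge0 ?exprn_ge0 ?addr_ge0 ?fact_ge0.
- by rewrite exprMn le_eqVlt; apply/orP; left; apply/eqP; ring.
Qed.

Lemma inB_Dl lam V : inB V -> inB (Dl lam V).
Proof.
move=> /inB_norm [H1 [c1 [r1 [hc1 [hr1 G1]]]]].
have hr1' : 0 <= r1 by apply: le_trans hr1.
apply: (@inB_of _ ((nc lam + 1) * c1) r1).
  by move=> [|p] q Hp.
move=> [|n] /=.
  by rewrite nc0 !mulr_ge0 ?addr_ge0 ?nc_ge0 ?exprn_ge0 ?fact_ge0.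
rewrite ncM; apply: le_trans (_ : (n%:R + nc lam) * (c1 * r1 ^+ n * (n`!)%:R) <= _).
  apply: ler_pM; rewrite ?nc_ge0 ?G1 //.
  by apply: le_trans (ncD _ _) _; rewrite ncN nc_nat.
rewrite factS natrM exprS.
have hf := fact_ge0 n.
have hx : 1 <= r1 ^+ n by apply: exprn_ege1.
have hl := nc_ge0 lam.
have hp : 0 <= r1 ^+ n by apply: le_trans hx.
set L := nc lam; set f := (n`!)%:R; set y := r1 ^+ n.
rewrite -[(n.+1)%:R]natr1.
have hn : (0 : RR) <= n%:R by apply: ler0n.
set a := (n%:R : RR).
have hc := hc1.
have hZ : 0 <= (L + 1) * (a + 1) * (c1 * y * f) by rewrite !mulr_ge0 ?addr_ge0.
apply: le_trans (_ : ((L + 1) * (a + 1)) * (c1 * y * f) <= _).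
  apply: ler_pM => //; rewrite ?addr_ge0 ?mulr_ge0 //.
  have := mulr_ge0 hl hn; rewrite -/a -/L => hLa.
  rewrite mulrDr !mulrDl mulr1 mul1r; lra.
have -> : (L + 1) * c1 * (r1 * y) * ((a + 1) * f) = ((L + 1) * (a + 1) * (c1 * y * f)) * r1 by ring.
by rewrite -{1}[X in X <= _]mulr1; apply: ler_pM.
Qed.

Lemma inB_sone : inB sone.
Proof.
apply: (@inB_of _ 1 1); first by move=> [|p] q.
move=> q; rewrite /sone /= expr1n !mul1r.
case: q => [|q] /=; first by rewrite nc_nat.
by rewrite nc0 ler0n.
Qed.


Definition AB (X : ser) (c rho : RR) :=
  forall p q, nc (X p q) <= c * rho ^+ (p + q) * (q`!)%:R.

Lemma Aconv_norm X : Aconv X -> exists c rho, 0 < c /\ 1 < rho /\ AB X c rho.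
Proof.
move=> [rho [c [hr [hc H]]]]; exists c, rho; split => //; split => // p q.
by rewrite -bndE.
Qed.

Lemma Aconv_of X c rho : 0 < c -> 1 < rho -> AB X c rho -> Aconv X.
Proof. by move=> hc hr H; exists rho, c; split => //; split => // p q; rewrite bndE. Qed.

Lemma eqle (x y : RR) : x = y -> x <= y.
Proof. by move=> ->. Qed.

Lemma key_ineq (a L y f : RR) : 0 <= a -> 0 <= L -> 1 <= y -> 0 <= f ->
  (a + 1) * f + (a + L) * (y * f) <= (L + 2%:R) * y * ((a + 1) * f).
Proof.
move=> ha hL hy hf.
have h1 : 0 <= (y - 1) * (a * L + a + 2%:R) by rewrite mulr_ge0 ?subr_ge0 ?addr_ge0 ?mulr_ge0.
have h2 : 0 <= a * L by rewrite mulr_ge0.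
have h3 : 0 <= ((y - 1) * (a * L + a + 2%:R) + a * L + 1) * f by rewrite mulr_ge0 ?addr_ge0.
have -> : (L + 2%:R) * y * ((a + 1) * f) =
  (a + 1) * f + (a + L) * (y * f) + ((y - 1) * (a * L + a + 2%:R) + a * L + 1) * f by ring.
by rewrite lerDl.
Qed.

Lemma Aconv_mulB X V : Aconv X -> inB V -> Aconv (smul X V).
Proof.
move=> /Aconv_norm [c1 [r1 [hc1 [hr1 G1]]]] /inB_norm [H2 [c2 [r2 [hc2 [hr2 G2]]]]].
rewrite smul_B //.
have hr1' : 0 <= r1 by apply: le_trans (ltW hr1).
have hr2' : 0 <= r2 by apply: le_trans hr2.
have hc1' := ltW hc1.
set r := r1 + r2.
have hr : 0 <= r by rewrite addr_ge0.
have hr1r : r1 <= r by rewrite lerDl.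
have hr2r : r2 <= r by rewrite lerDr.
apply: (@Aconv_of _ (c1 * c2 + 1) (2%:R * r)).
- by rewrite ltr_wpDl ?mulr_ge0.
- rewrite -[1]mulr1 ltr_pM //; first lra.
  by apply: lt_le_trans hr1 hr1r.
move=> m n; apply: le_trans (nc_sum _ _) _.
apply: le_trans (@sum_const_bound n (fun s => nc (V 0%N s * X m (n - s)%N)) ((c1 * r ^+ m) * c2 * r ^+ n * (n`!)%:R) _ _) _.
- move=> s Hs; rewrite ncM; apply: le_trans _ (@term_bound (c1 * r ^+ m) c2 r s n Hs _ hc2 hr); last first.
    by rewrite mulr_ge0 ?exprn_ge0.
  apply: ler_pM; rewrite ?nc_ge0 //.
    by apply: (@Gev_mono V c2 r2 c2 r) => //.
  apply: le_trans (G1 m (n - s)%N) _.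
  rewrite exprD -!mulrA; apply: ler_pM; rewrite ?mulr_ge0 ?exprn_ge0 ?fact_ge0 //.
  apply: ler_pM; rewrite ?mulr_ge0 ?exprn_ge0 ?fact_ge0 //; first by rewrite lerXn2r ?nnegrE.
  apply: ler_pM; rewrite ?mulr_ge0 ?exprn_ge0 ?fact_ge0 //; first by rewrite lerXn2r ?nnegrE.
- by rewrite !mulr_ge0 ?exprn_ge0 ?fact_ge0.
- rewrite exprMn.
  have h2 : (2%:R : RR) ^+ n <= 2%:R ^+ (m + n) by apply: ler_weXn2l; [rewrite ler1n | lia].
  have h2' : (0 : RR) <= 2%:R ^+ n by rewrite exprn_ge0 ?ler0n.
  have hf := fact_ge0 n.
  have hx : 0 <= r ^+ (m + n) by rewrite exprn_ge0.
  have -> : c1 * r ^+ m * c2 * r ^+ n * (n`!)%:R * 2%:R ^+ n =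
     (c1 * c2) * (r ^+ (m + n) * (n`!)%:R) * 2%:R ^+ n by rewrite exprD; ring.
  have -> : (c1 * c2 + 1) * (2%:R ^+ (m + n) * r ^+ (m + n)) * (n`!)%:R =
     (c1 * c2 + 1) * (r ^+ (m + n) * (n`!)%:R) * 2%:R ^+ (m + n) by ring.
  apply: ler_pM; rewrite ?mulr_ge0 //.
  apply: ler_pM; rewrite ?mulr_ge0 //.
  by rewrite lerDl.
Qed.

Fixpoint Qd (lam : CC) (X : ser) (p n : nat) {struct n} : CC :=
  match n with
  | 0%N => X p.+1 0%N
  | n'.+1 => X p.+1 n'.+1 + (n'%:R + lam) * Qd lam X p.+1 n'
  end.

Definition rd (lam : CC) (X : ser) : ser := fun p n =>
  if p is 0%N then X 0%N n + (if n is n'.+1 then (n'%:R + lam) * Qd lam X 0 n' else 0) else 0.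

Lemma div_eq lam X : X = sadd (smul (Qd lam X) (slin lam)) (rd lam X).
Proof.
rewrite smul_slin.
apply: functional_extensionality => m; apply: functional_extensionality => n.
rewrite /sadd /Ra /Rb /rd.
case: m => [|p]; case: n => [|n] /=; ring.
Qed.

Lemma Qd_bound lam X C rho : 0 <= C -> 1 <= rho -> AB X C rho ->
  forall n p, nc (Qd lam X p n) <= C * rho ^+ (p + n).+1 * (nc lam + 2%:R) ^+ n * (n`!)%:R.
Proof.
move=> hC hr G; elim=> [|n IH] p /=.
  by rewrite expr0 mulr1 addn0; apply: le_trans (G _ _) _; rewrite addn0.
apply: le_trans (ncD _ _) _.
rewrite ncM.
set L := nc lam.
have hL : 0 <= L := nc_ge0 lam.
have hn : (0 : RR) <= n%:R := ler0n _ _.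
have hf := fact_ge0 n.
set E := rho ^+ (p + n.+1).+1.
have hE : 0 <= E by rewrite exprn_ge0 // (le_trans _ hr).
have hy : 1 <= (L + 2%:R) ^+ n by apply: exprn_ege1; lra.
apply: le_trans (_ : C * E * ((n%:R + 1) * (n`!)%:R) +
   (n%:R + L) * (C * E * ((L + 2%:R) ^+ n * (n`!)%:R)) <= _).
  apply: lerD.
    apply: le_trans (G _ _) _.
    by rewrite factS natrM -natr1 /E !addnS !addSn lexx.
  apply: ler_pM; rewrite ?nc_ge0 //.
    by apply: le_trans (ncD _ _) _; rewrite nc_nat.
  apply: le_trans (IH p.+1) _.
  by rewrite /E addSn addnS; apply: eqle; ring.
have K := @key_ineq _ _ _ _ hn hL hy hf.
have hCE : 0 <= C * E by rewrite mulr_ge0.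
rewrite factS natrM exprS -[(n.+1)%:R]natr1.
have -> : C * E * ((n%:R + 1) * (n`!)%:R) + (n%:R + L) * (C * E * ((L + 2%:R) ^+ n * (n`!)%:R))
   = (C * E) * ((n%:R + 1) * (n`!)%:R + (n%:R + L) * ((L + 2%:R) ^+ n * (n`!)%:R)) by ring.
have -> : C * E * ((L + 2%:R) * (L + 2%:R) ^+ n) * ((n%:R + 1) * (n`!)%:R)
   = (C * E) * ((L + 2%:R) * (L + 2%:R) ^+ n * ((n%:R + 1) * (n`!)%:R)) by ring.
apply: ler_pM => //; rewrite ?addr_ge0 ?mulr_ge0 //.
all: try lra.
all: try (apply: exprn_ge0; lra).
Qed.

Lemma division lam X : Aconv X ->
  exists Q r, Aconv Q /\ inB r /\ X = sadd (smul Q (slin lam)) r.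
Proof.
move=> /Aconv_norm [C [rho [hC [hr G]]]].
exists (Qd lam X), (rd lam X); split; last split; last exact: div_eq.
- set L := nc lam.
  have hL : 0 <= L := nc_ge0 lam.
  have hM : 1 <= L + 2%:R by lra.
  have hr' : 1 <= rho by apply: ltW.
  apply: (@Aconv_of _ (C * rho) (rho * (L + 2%:R))).
  + by rewrite mulr_gt0 // (lt_trans _ hr).
  + nra.
  + move=> p n; apply: le_trans (@Qd_bound lam X C rho (ltW hC) hr' G n p) _.
    rewrite exprS exprMn.
    have h1 : (L + 2%:R) ^+ n <= (L + 2%:R) ^+ (p + n) by apply: ler_weXn2l => //; lia.
    have h0 : 0 <= rho ^+ (p + n) by apply: exprn_ge0; lra.
    have hf := fact_ge0 n.
    have -> : C * (rho * rho ^+ (p + n)) * (L + 2%:R) ^+ n * (n`!)%:R =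
      (C * rho * rho ^+ (p + n) * (n`!)%:R) * (L + 2%:R) ^+ n by ring.
    have -> : C * rho * (rho ^+ (p + n) * (L + 2%:R) ^+ (p + n)) * (n`!)%:R =
      (C * rho * rho ^+ (p + n) * (n`!)%:R) * (L + 2%:R) ^+ (p + n) by ring.
    apply: ler_pM => //; last by apply: exprn_ge0; lra.
    by rewrite !mulr_ge0 //; lra.
- set L := nc lam.
  have hL : 0 <= L := nc_ge0 lam.
  have hr' : 1 <= rho by apply: ltW.
  apply: (@inB_of _ C (rho * (L + 2%:R))); first by move=> [|p] q.
  move=> [|n] /=.
    rewrite addr0 expr0 mulr1 fact0 mulr1; apply: le_trans (G 0 0) _.
    by rewrite expr0 mulr1 fact0 mulr1.
  apply: le_trans (ncD _ _) _; rewrite ncM.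
  have hn : (0 : RR) <= n%:R := ler0n _ _.
  have hf := fact_ge0 n.
  have hy : 1 <= (L + 2%:R) ^+ n by apply: exprn_ege1; lra.
  set E := rho ^+ n.+1.
  have hE : 0 <= E by apply: exprn_ge0; lra.
  apply: le_trans (_ : C * E * ((n%:R + 1) * (n`!)%:R) +
     (n%:R + L) * (C * E * ((L + 2%:R) ^+ n * (n`!)%:R)) <= _).
    apply: lerD.
      by apply: le_trans (G 0 n.+1) _; rewrite factS natrM -[(n.+1)%:R]natr1 /E add0n lexx.
    apply: ler_pM; rewrite ?nc_ge0 //.
      by apply: le_trans (ncD _ _) _; rewrite nc_nat.
    apply: le_trans (@Qd_bound lam X C rho (ltW hC) hr' G n 0) _.
    by rewrite add0n /E; apply: eqle; ring.
  have K := @key_ineq _ _ _ _ hn hL hy hf.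
  have hCE : 0 <= C * E by rewrite mulr_ge0 // ltW.
  rewrite factS natrM exprMn -/E [(_ + _) ^+ n.+1]exprS -[(n.+1)%:R]natr1.
  have -> : C * E * ((n%:R + 1) * (n`!)%:R) + (n%:R + L) * (C * E * ((L + 2%:R) ^+ n * (n`!)%:R))
     = (C * E) * ((n%:R + 1) * (n`!)%:R + (n%:R + L) * ((L + 2%:R) ^+ n * (n`!)%:R)) by ring.
  have -> : C * (E * ((L + 2%:R) * (L + 2%:R) ^+ n)) * ((n%:R + 1) * (n`!)%:R)
     = (C * E) * ((L + 2%:R) * (L + 2%:R) ^+ n * ((n%:R + 1) * (n`!)%:R)) by ring.
  apply: ler_pM => //; rewrite ?addr_ge0 ?mulr_ge0 //.
  all: try lra.
  all: try (apply: exprn_ge0; lra).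
Qed.



Lemma Ra_add A B : Ra (sadd A B) = sadd (Ra A) (Ra B).
Proof. by fext m n; rewrite /Ra /sadd; case: m => [|m]; case: n => [|n]; ring. Qed.

Lemma Ra_zero : Ra szero = szero.
Proof. by fext m n; rewrite /Ra /szero; case: m => [|m]; case: n => [|n]; ring. Qed.

Lemma iterRa_add j A B : iter j Ra (sadd A B) = sadd (iter j Ra A) (iter j Ra B).
Proof. by elim: j => //= j ->; rewrite Ra_add. Qed.

Lemma iterRa_zero j : iter j Ra szero = szero.
Proof. by elim: j => //= j ->; rewrite Ra_zero. Qed.

Lemma sumS_fun k (F : nat -> ser) :
  (fun m n => \sum_(j < k.+1) F j m n) = sadd (fun m n => \sum_(j < k) F j m n) (F k).
Proof. by fext m n; rewrite big_ord_recr. Qed.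

Lemma sum0_fun (F : nat -> ser) : (fun m n => \sum_(j < 0) F j m n) = szero.
Proof. by fext m n; rewrite big_ord0. Qed.

Lemma Ra_sum k (F : nat -> ser) :
  Ra (fun m n => \sum_(j < k) F j m n) = fun m n => \sum_(j < k) Ra (F j) m n.
Proof.
elim: k => [|k IH]; first by rewrite sum0_fun Ra_zero; fext m n; rewrite big_ord0.
by rewrite sumS_fun Ra_add IH; fext m n; rewrite /sadd big_ord_recr.
Qed.

Lemma inB_zero : inB szero.
Proof. by apply: (@inB_of _ 0 0) => // q; rewrite /szero nc0 !mul0r. Qed.

Definition BL k R := exists W : nat -> ser, (forall j, (j < k)%N -> inB (W j)) /\
  R = (fun m n => \sum_(j < k) iter j Ra (W j) m n).

Lemma BL_B Z : inB Z -> BL 1 Z.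
Proof. by move=> HZ; exists (fun _ => Z); split => //; fext m n; rewrite big_ord1. Qed.

Lemma BL_zero k : BL k szero.
Proof.
exists (fun _ => szero); split => [j _|]; first exact: inB_zero.
by fext m n; rewrite /szero; apply/esym; apply: big1 => j _; rewrite iterRa_zero.
Qed.

Lemma BL_add k A B : BL k A -> BL k B -> BL k (sadd A B).
Proof.
move=> [W [HW ->]] [W' [HW' ->]].
exists (fun j => sadd (W j) (W' j)); split => [j Hj|]; first by apply: inB_add; auto.
by fext m n; rewrite /sadd -big_split; apply: eq_bigr => j _; rewrite iterRa_add.
Qed.

Lemma BL_mono k R : BL k R -> BL k.+1 R.
Proof.
move=> [W [HW ->]].
exists (fun j => if (j < k)%N then W j else szero); split => [j Hj|].
  by case: ifP => H; [apply: HW | apply: inB_zero].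
fext m n; rewrite big_ord_recr /= ltnn iterRa_zero /szero addr0.
by apply: eq_bigr => j _; rewrite ltn_ord.
Qed.

Lemma BL_mono_le k k' R : (k <= k')%N -> BL k R -> BL k' R.
Proof.
move=> H; elim: k' H => [|k' IH] H.
  by have -> : k = 0%N by lia.
case: (eqVneq k k'.+1) => [-> //|Hne] HB.
by apply: BL_mono; apply: IH => //; lia.
Qed.

Lemma BL_Ra k R : BL k R -> BL k.+1 (Ra R).
Proof.
move=> [W [HW ->]].
exists (fun j => if j is j'.+1 then W j' else szero); split => [[|j] Hj|].
  exact: inB_zero.
  by apply: HW.
rewrite (Ra_sum k (fun j => iter j Ra (W j))); fext m n; rewrite big_ord_recl /= /szero add0r.
by apply: eq_bigr => j _.
Qed.

Lemma BL_sum k k' (G : nat -> ser) : (forall j, (j < k')%N -> BL k (G j)) ->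
  BL k (fun m n => \sum_(j < k') G j m n).
Proof.
elim: k' => [|k' IH] H; first by rewrite sum0_fun; apply: BL_zero.
rewrite sumS_fun; apply: BL_add; last by apply: H.
by apply: IH => j Hj; apply: H; lia.
Qed.

Lemma Ra_slin0 X : Ra X = smul X (slin 0).
Proof. by rewrite smul_slin; fext m n; rewrite mul0r subr0. Qed.

Lemma inB_sup S : inB S -> forall p q, (0 < p)%N -> S p q = 0.
Proof. by case. Qed.

Lemma BL_G U j : inB U -> forall V, inB V -> BL j.+1 (smul (iter j Ra U) V).
Proof.
move=> HU; elim: j => [|j IH] V HV.
  by apply: BL_B; apply: inB_mul.
rewrite iterS Ra_slin0 smulA smul_slinB; last exact: inB_sup.
rewrite smulDr; apply: BL_add.
  rewrite Ra_slin0 -smulA -Ra_slin0; apply: BL_Ra; exact: IH.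
apply: BL_mono; apply: IH; exact: inB_Dl.
Qed.

Lemma BL_H k R V : BL k R -> inB V -> BL k (smul R V).
Proof.
move=> [W [HW ->]] HV.
rewrite (smul_sum_l k (fun j => iter j Ra (W j))); apply: (@BL_sum k k (fun j => smul (iter j Ra (W j)) V)) => j Hj.
apply: (@BL_mono_le j.+1) => //; apply: BL_G => //; exact: HW.
Qed.

Lemma BL_K k R lam S : BL k R -> inB S -> BL k.+1 (smul R (smul (slin lam) S)).
Proof.
move=> HR HS.
rewrite smul_slinB; last exact: inB_sup.
rewrite smulDr; apply: BL_add.
  rewrite Ra_slin0 -smulA -Ra_slin0; apply: BL_Ra; exact: BL_H.
apply: BL_mono; apply: BL_H => //; exact: inB_Dl.
Qed.

Lemma iterRa_sup j W : (forall p q, (0 < p)%N -> W p q = 0) ->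
  forall m n, (j < m)%N -> iter j Ra W m n = 0.
Proof.
move=> HW m n Hm; rewrite iterRaE; apply: big1 => p _; apply: big1 => q _.
case: (posnP p) => Hp.
  by rewrite Ncoef_upa ?mulr0 //; rewrite Hp subn0.
by rewrite HW ?mul0r.
Qed.

Lemma BL_support k R : BL k R -> forall m n, (k <= m)%N -> R m n = 0.
Proof.
move=> [W [HW ->]] m n Hm; apply: big1 => j _.
apply: iterRa_sup; last by apply: leq_trans Hm.
by apply: inB_sup; apply: HW.
Qed.

Lemma smul_sapow X j : smul X (sapow j) = iter j Ra X.
Proof.
fext m n.
have Hj : (j < (m + n + j).+1)%N by lia.
rewrite (@smulE X (sapow j) m n (m + n + j).+1); last lia.
rewrite (bigD1 (Ordinal Hj)) //= [X in _ + X]big1 ?addr0; last first.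
  move=> r /eqP Hr; apply: big1 => s _; rewrite /sapow.
  have -> : (nat_of_ord r == j) = false by apply/negbTE/eqP => E; apply: Hr; apply: val_inj.
  by rewrite mul0r.
rewrite big_ord_recl [X in _ + X]big1 ?addr0; last first.
  by move=> s _; rewrite /sapow /= eqxx /= mul0r.
by rewrite /sapow /= eqxx mul1r.
Qed.

Lemma BL_BaDeg k R : BL k R <-> BaDegLt k R.
Proof.
split => [[W [HW ->]]|[W [HW ->]]]; exists W; split => //;
  by fext m n; apply: eq_bigr => j _; rewrite smul_sapow.
Qed.


Lemma saddA A B C : sadd (sadd A B) C = sadd A (sadd B C).
Proof. by fext m n; rewrite /sadd addrA. Qed.

Lemma existence k lam Ss : (forall i, (i < k)%N -> invB (Ss i)) ->
  forall X, Aconv X -> exists Q R, Aconv Q /\ BL k R /\ X = sadd (smul Q (Pprod lam Ss k)) R.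
Proof.
elim: k => [|k IH] HS X HX.
  exists X, szero; split => //; split; first exact: BL_zero.
  by rewrite /= smul1; fext m n; rewrite /sadd /szero addr0.
have [HSB [T0 [HT0 [HST HTS]]]] := HS k (ltnSn k).
have HX' : Aconv (smul X T0) := @Aconv_mulB X T0 HX HT0.
have [Q1 [r1 [HQ1 [Hr1 E1]]]] := @division (lam k) _ HX'.
have HS' : forall i, (i < k)%N -> invB (Ss i) by move=> i Hi; apply: HS; apply: ltnW.
have [Q [R2 [HQ [HR2 E2]]]] := IH HS' Q1 HQ1.
exists Q, (sadd (smul R2 (smul (slin (lam k)) (Ss k))) (smul r1 (Ss k))).
split => //; split.
  apply: BL_add; first exact: BL_K.
  by apply: (@BL_mono_le 1); [lia | apply: BL_B; apply: inB_mul].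
have EX : X = smul (smul X T0) (Ss k) by rewrite smulA HTS smul1.
rewrite {1}EX E1 smulDl smulA E2 smulDl smulA /= saddA.
by [].
Qed.

Lemma uniqueness k lam Ss : (forall i, (i < k)%N -> invB (Ss i)) ->
  forall Q R, (forall m n, (k <= m)%N -> R m n = 0) ->
  sadd (smul Q (Pprod lam Ss k)) R = szero -> Q = szero.
Proof.
elim: k => [|k IH] HS Q R HR E.
  rewrite /= smul1 in E; fext m n.
  have := congr1 (fun f => f m n) E; rewrite /sadd /szero HR //.
  by rewrite addr0.
have [HSB [T0 [HT0 [HST HTS]]]] := HS k (ltnSn k).
have HS' : forall i, (i < k)%N -> invB (Ss i) by move=> i Hi; apply: HS; apply: ltnW.
set Y := smul Q (Pprod lam Ss k).
have EY : smul Q (Pprod lam Ss k.+1) = smul (smul Y (slin (lam k))) (Ss k).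
  by rewrite /= -smulA -smulA.
rewrite EY in E.
have E' : sadd (smul Y (slin (lam k))) (smul R T0) = szero.
  have := congr1 (fun Z => smul Z T0) E; rewrite /= smul0l smulDl smulA HST smul1.
  by [].
have HRT : forall m n, (k.+1 <= m)%N -> smul R T0 m n = 0.
  move=> m n Hm; rewrite smul_B; last exact: inB_sup.
  by apply: big1 => s _; rewrite HR ?mulr0.
have HY : forall n p, (k <= p)%N -> Y p n = 0.
  elim=> [|n IHn] p Hp.
    have := congr1 (fun f => f p.+1 0%N) E'; rewrite smul_slin /sadd /szero (HRT p.+1 0%N Hp).
    by rewrite /Ra /Rb /= => H; rewrite -[RHS]H; ring.
  have := congr1 (fun f => f p.+1 n.+1) E'; rewrite smul_slin /sadd /szero (HRT p.+1 n.+1 Hp).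
  by rewrite /Ra /Rb /= (IHn p.+1 (leqW Hp)) => H; rewrite -[RHS]H; ring.
apply: (IH HS' Q (sscale (-1) Y)).
  by move=> m n Hm; rewrite /sscale HY // mulr0.
by fext m n; rewrite /sadd /sscale /szero -/Y mulN1r subrr.
Qed.

Theorem theorem1p2p4 (k : nat) (lam : nat -> CC) (Ss : nat -> ser)
  (HS : forall i, (i < k)%N -> invB (Ss i)) (X : ser) (HX : Aconv X) :
  exists (Q R : ser),
    (Aconv Q /\ BaDegLt k R /\ X = sadd (smul Q (Pprod lam Ss k)) R) /\
    forall (Q' R' : ser), Aconv Q' -> BaDegLt k R' ->
      X = sadd (smul Q' (Pprod lam Ss k)) R' -> Q' = Q /\ R' = R.
Proof.
have [Q [R [HQ [HR EX]]]] := @existence k lam Ss HS X HX.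
exists Q, R; split; first by split => //; split => //; apply/BL_BaDeg.
move=> Q' R' HQ' /BL_BaDeg HR' EX'.
set P := Pprod lam Ss k.
have HD : sadd (smul (sadd Q (sscale (-1) Q')) P) (sadd R (sscale (-1) R')) = szero.
  rewrite smulDl smulZl; fext m n.
  have e1 := congr1 (fun f => f m n) EX; have e2 := congr1 (fun f => f m n) EX'.
  rewrite /sadd /sscale /szero /= in e1 e2 *.
  have e : smul Q P m n + R m n = smul Q' P m n + R' m n by rewrite -e1 -e2.
  have -> : smul Q P m n + -1 * smul Q' P m n + (R m n + -1 * R' m n) =
    (smul Q P m n + R m n) - (smul Q' P m n + R' m n) by ring.
  by rewrite e subrr.
have Hsup : forall m n, (k <= m)%N -> sadd R (sscale (-1) R') m n = 0.
  by move=> m n Hm; rewrite /sadd /sscale (@BL_support k R HR) // (@BL_support k R' HR') // mulr0 addr0.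
have HQQ := @uniqueness k lam Ss HS _ _ Hsup HD.
have EQ : Q' = Q.
  fext m n; have := congr1 (fun f => f m n) HQQ.
  by rewrite /sadd /sscale /szero mulN1r => /eqP; rewrite subr_eq0 => /eqP ->.
split => //.
rewrite EQ in EX'.
fext m n; have e1 := congr1 (fun f => f m n) EX; have e2 := congr1 (fun f => f m n) EX'.
rewrite /sadd in e1 e2.
by apply: (@addrI _ (smul Q P m n)); rewrite -e1 -e2.
Qed.
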